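(* Let $n\ge1$. Let $H_1,H_2$ be two edge-disjoint Hamilton cycles of $G_{n,3}$ and $E_1,E_2$ two edge-disjoint directed Hamilton cycles of $Q_{2n}$ (starting at $\mathbf 0$). Then the four Hamilton cycles $g(E_1,H_1)$, $g(E_1,H_2)$, $g(E_2,H_1)$, $g(E_2,H_2)$ of $Q_{6n}$ are pairwise edge-disjoint.
   Context: $Q_{2n}$ is realized as the graph on quaternary strings $q_1\cdots q_n$, $q_i\in\{0,1,2,3\}$, adjacent iff they differ in exactly one position and there by $\pm1\pmod4$; $\mathbf 0=0\cdots0$. $G_{n,3}=C_{4^n}\Box C_{4^n}\Box C_{4^n}$ has vertex set $(\mathbb Z/4^n\mathbb Z)^3$, adjacency: differ in exactly one coordinate, by $\pm1\pmod{4^n}$. For a directed Hamilton cycle $E$ of $Q_{2n}$ listing vertices $e_0=\mathbf 0,e_1,\dots,e_{4^n-1}$, put $\pi_E(e_p)=p$. Identify $V(Q_{6n})$ with triples $(u,w,t)$ of quaternary strings of length $n$ (digits $1..n$, $n+1..2n$, $2n+1..3n$), so $Q_{6n}=Q_{2n}\Box Q_{2n}\Box Q_{2n}$, and let $\Psi_E(u,w,t)=(\pi_E(u),\pi_E(w),\pi_E(t))$; $\Psi_E^{-1}$ maps edges of $G_{n,3}$ to edges of $Q_{6n}$. For a Hamilton cycle $H$ of $G_{n,3}$, $g(E,H):=\Psi_E^{-1}(H)$, a Hamilton cycle of $Q_{6n}$. *)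

(* Defs.v *)
From mathcomp Require Import all_boot.
Set Implicit Arguments. Unset Strict Implicit. Unset Printing Implicit Defensive.

(* Vertices of the cyclic-product graph C_m^k : strings of length k over Z/mZ,
   represented as finite functions 'I_k -> 'I_m. *)
Definition cvert (m k : nat) := {ffun 'I_k -> 'I_m}.

Definition cadj (m k : nat) : rel (cvert m k) := fun x y =>
  [exists i : 'I_k,
     [forall j : 'I_k, (j != i) ==> (x j == y j)] &&
     ((y i == (x i).+1 %% m :> nat) || (x i == (y i).+1 %% m :> nat))].

(* Q_{2n}: quaternary strings of length n, adjacent iff they differ in exactly
   one position, by +-1 mod 4. *)
Definition qstr (n : nat) := cvert 4 n.
Definition qadj (n : nat) : rel (qstr n) := @cadj 4 n.

(* G_{n,3} = C_{4^n} [] C_{4^n} [] C_{4^n}, vertex set (Z/4^n Z)^3. *)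
Definition gvert (n : nat) := cvert (4 ^ n) 3.
Definition gadj (n : nat) : rel (gvert n) := @cadj (4 ^ n) 3.

(* A Hamilton cycle, given as the cyclic (directed) list of its vertices:
   every vertex occurs exactly once and cyclically consecutive vertices
   are adjacent. *)
Definition ham_cycle (T : finType) (adj : rel T) (c : seq T) : Prop :=
  [/\ uniq c, forall x : T, x \in c & cycle adj c].

Definition cyc_edge (T : eqType) (c : seq T) (x y : T) : bool :=
  ((x, y) \in zip c (rot 1 c)) || ((y, x) \in zip c (rot 1 c)).

Definition edge_disjoint (T : eqType) (c1 c2 : seq T) : Prop :=
  forall x y : T, ~~ (cyc_edge c1 x y && cyc_edge c2 x y).

Definition qzero (n : nat) : qstr n := [ffun => ord0].

Definition dham_from0 (n : nat) (E : seq (qstr n)) : Prop :=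
  ham_cycle (@qadj n) E /\ nth (qzero n) E 0 = qzero n.

Definition piE (n : nat) (E : seq (qstr n)) (u : qstr n) : nat := index u E.

(* Identification of a triple (u,w,t) of length-n strings with the length-3n
   string whose digits 1..n are u, n+1..2n are w, 2n+1..3n are t. *)
Definition join3 (n : nat) (u w t : qstr n) : qstr (3 * n) :=
  [ffun i : 'I_(3 * n) =>
     nth ord0 ([seq u j | j <- enum 'I_n] ++ [seq w j | j <- enum 'I_n]
                ++ [seq t j | j <- enum 'I_n]) i].

Definition PsiE_inv (n : nat) (E : seq (qstr n)) (v : gvert n) : qstr (3 * n) :=
  join3 (nth (qzero n) E (v ord0))
        (nth (qzero n) E (v (inord 1)))
        (nth (qzero n) E (v (inord 2))).

Definition gEH (n : nat) (E : seq (qstr n)) (H : seq (gvert n)) : seq (qstr (3 * n)) :=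
  map (PsiE_inv E) H.

(* Main.v *)
Require Import Defs.
From mathcomp Require Import all_boot.
From mathcomp Require Import zify.
Set Implicit Arguments. Unset Strict Implicit.

Lemma path_rcons_zip (T : Type) (e : rel T) x s y :
  path e x (rcons s y) -> all (fun p => e p.1 p.2) (zip (x :: s) (rcons s y)).
Proof.
elim: s x => [|z s IH] x /=; first by rewrite andbT.
by case/andP=> -> /IH.
Qed.

Lemma cycle_zip (T : eqType) (e : rel T) c p :
  cycle e c -> p \in zip c (rot 1 c) -> e p.1 p.2.
Proof.
case: c => [|x s] //= hc; rewrite rot1_cons => hp.
have := path_rcons_zip hc; move/allP; apply; exact: hp.
Qed.

Lemma nth_rot1 (T : Type) (x0 : T) c p : p < size c ->
  nth x0 (rot 1 c) p = nth x0 c (p.+1 %% size c).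
Proof.
case: c => [|x s] //= hp; rewrite rot1_cons nth_rcons.
case: (ltngtP p (size s)) => [hlt|hgt|->].
- by rewrite modn_small.
- by exfalso; move: hp hgt; rewrite ltnS => /leq_ltn_trans h /h; rewrite ltnn.
- by rewrite modnn.
Qed.

Lemma cyc_edgeC (T : eqType) (c : seq T) x y : cyc_edge c x y = cyc_edge c y x.
Proof. by rewrite /cyc_edge orbC. Qed.

Lemma cyc_edge_nth (T : eqType) (x0 : T) c p : p < size c ->
  cyc_edge c (nth x0 c p) (nth x0 c (p.+1 %% size c)).
Proof.
move=> hp; apply/orP; left.
rewrite -nth_rot1 // -nth_zip; last by rewrite size_rot.
by apply: mem_nth; rewrite size_zip size_rot minnn.
Qed.

Lemma cadj_sym m k : symmetric (@cadj m k).
Proof.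
move=> x y; apply/idP/idP => /existsP[i /andP[/forallP h o]];
 apply/existsP; exists i; rewrite orbC o andbT; apply/forallP=> j;
 apply/implyP=> /(implyP (h j)) /eqP-> //.
Qed.

Lemma zip_map2 (A B : Type) (f : A -> B) s t :
  zip (map f s) (map f t) = map (fun p => (f p.1, f p.2)) (zip s t).
Proof. by elim: s t => [|x s IH] [|y t] //=; rewrite IH. Qed.

Lemma cyc_edge_map (A B : eqType) (f : A -> B) s x y :
  cyc_edge (map f s) x y -> exists a b, cyc_edge s a b /\ x = f a /\ y = f b.
Proof.
rewrite /cyc_edge -map_rot zip_map2.
case/orP => /mapP[[a b] hin [-> ->]] /=.
  by exists a, b; rewrite hin.
by exists b, a; rewrite hin orbT.
Qed.

Lemma ord3 (k : 'I_3) : k = ord0 \/ k = inord 1 \/ k = inord 2.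
Proof.
case: k => [[|[|[|]]] hk] //.
- by left; apply: val_inj.
- by right; left; apply: val_inj; rewrite /= inordK.
- by right; right; apply: val_inj; rewrite /= inordK.
Qed.

Definition L3 n (u w t : qstr n) :=
  [seq u j | j <- enum 'I_n] ++ [seq w j | j <- enum 'I_n]
                ++ [seq t j | j <- enum 'I_n].

Lemma join3_inj n (u w t u' w' t' : qstr n) :
  join3 u w t = join3 u' w' t' -> [/\ u = u', w = w' & t = t'].
Proof.
move=> E.
have hL : L3 u w t = L3 u' w' t'.
  apply: (eq_from_nth (x0 := ord0)).
    by rewrite !size_cat !size_map.
  move=> i; rewrite !size_cat !size_map -!enumT size_enum_ord => hi.
  have hi' : i < 3 * n by lia.
  move: (congr1 (fun f : qstr (3 * n) => f (Ordinal hi')) E).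
  by rewrite /join3 !ffunE.
move: hL; rewrite /L3 => /eqP.
rewrite eqseq_cat ?size_map // => /andP[/eqP h1 /eqP].
move/eqP; rewrite eqseq_cat ?size_map // => /andP[/eqP h2 /eqP h3].
split; apply/ffunP => j.
- by apply: (proj2 (eq_in_map _ _ _) h1); rewrite mem_enum.
- by apply: (proj2 (eq_in_map _ _ _) h2); rewrite mem_enum.
- by apply: (proj2 (eq_in_map _ _ _) h3); rewrite mem_enum.
Qed.

Lemma Psi_eq n (E E' : seq (qstr n)) a a' :
  PsiE_inv E a = PsiE_inv E' a' ->
  forall k, nth (qzero n) E (a k) = nth (qzero n) E' (a' k).
Proof.
rewrite /PsiE_inv => /join3_inj [h1 h2 h3] k.
by case: (ord3 k) => [->|[->|->]].
Qed.

Lemma size_ham n (E : seq (qstr n)) : ham_cycle (@qadj n) E -> size E = 4 ^ n.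
Proof.
case=> u all _.
rewrite -(card_uniqP u) (eq_cardT (A := mem E)) //.
by rewrite -cardT /qstr /cvert card_ffun !card_ord.
Qed.

Lemma ham_edge n (H : seq (gvert n)) a b :
  ham_cycle (@gadj n) H -> cyc_edge H a b -> gadj a b.
Proof.
case=> _ _ cy; case/orP => hin.
  exact: (cycle_zip cy hin).
by rewrite /gadj cadj_sym; exact: (cycle_zip cy hin).
Qed.

Lemma succmod_neq m a b : 2 <= m -> a < m -> b = a.+1 %% m -> a = b -> False.
Proof.
move=> m2 am -> ab.
case: (ltngtP a.+1 m) => [hl|hg|hq].
- by move: ab; rewrite modn_small //; lia.
- lia.
- by move: ab; rewrite hq modnn; lia.
Qed.

Lemma E_edge n (E : seq (qstr n)) (a b : gvert n) :
  1 <= n -> dham_from0 E -> gadj a b ->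
  exists i : 'I_3,
   [/\ forall k, k != i -> nth (qzero n) E (a k) = nth (qzero n) E (b k),
       nth (qzero n) E (a i) != nth (qzero n) E (b i) &
       cyc_edge E (nth (qzero n) E (a i)) (nth (qzero n) E (b i))].
Proof.
move=> n1 [hE _] /existsP[i /andP[/forallP h o]].
have sE := size_ham hE.
have m2 : 2 <= 4 ^ n by rewrite (leq_trans _ (leq_pexp2l _ n1)).
exists i; split.
- by move=> k /(implyP (h k)) /eqP->.
- case: hE => u _ _.
  rewrite nth_uniq ?sE //.
  apply/eqP => e'.
  have ha := ltn_ord (a i); have hb := ltn_ord (b i).
  by case/orP: o => /eqP; rewrite e' => e; exact: (succmod_neq m2 hb e (erefl _)).
- case/orP: o => /eqP e.
    rewrite e; have := @cyc_edge_nth _ (qzero n) E (a i).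
    by rewrite sE; apply; apply: ltn_ord.
  rewrite cyc_edgeC e; have := @cyc_edge_nth _ (qzero n) E (b i).
  by rewrite sE; apply; apply: ltn_ord.
Qed.

Lemma gEH_edge n (E : seq (qstr n)) (H : seq (gvert n)) x y :
  ham_cycle (@gadj n) H -> cyc_edge (gEH E H) x y ->
  exists a b, [/\ cyc_edge H a b, gadj a b, x = PsiE_inv E a & y = PsiE_inv E b].
Proof.
move=> hH /cyc_edge_map [a [b [h [ex ey]]]].
by exists a, b; split => //; exact: ham_edge h.
Qed.

Lemma diffE n (E1 E2 : seq (qstr n)) (H H' : seq (gvert n)) :
  1 <= n -> dham_from0 E1 -> dham_from0 E2 -> edge_disjoint E1 E2 ->
  ham_cycle (@gadj n) H -> ham_cycle (@gadj n) H' ->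
  edge_disjoint (gEH E1 H) (gEH E2 H').
Proof.
move=> n1 d1 d2 dis hH hH' x y; apply/negP => /andP[c1 c2].
case: (gEH_edge hH c1) => a [b [_ ab ex ey]].
case: (gEH_edge hH' c2) => a' [b' [_ ab' ea eb]].
rewrite ex in ea; rewrite ey in eb.
have EA := Psi_eq ea; have EB := Psi_eq eb.
case: (E_edge n1 d1 ab) => i [h1 n1' c1'].
case: (E_edge n1 d2 ab') => i' [h2 _ c2'].
have ii : i' = i.
  apply/eqP; apply/negPn/negP => ne.
  move: (h2 i); rewrite eq_sym => /(_ ne); rewrite -EA -EB => e.
  by rewrite e eqxx in n1'.
subst i'.
move: (dis (nth (qzero n) E1 (a i)) (nth (qzero n) E1 (b i))).
by rewrite c1' EA EB c2'.
Qed.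

Lemma Psi_inj n (E : seq (qstr n)) a a' : dham_from0 E ->
  PsiE_inv E a = PsiE_inv E a' -> a = a'.
Proof.
move=> [hE _] /Psi_eq e; have sE := size_ham hE.
case: hE => u _ _.
apply/ffunP => k; apply: val_inj; apply/eqP.
rewrite -(nth_uniq (qzero n) _ _ u); first by apply/eqP; exact: e k.
  by rewrite sE; exact: ltn_ord.
by rewrite sE; exact: ltn_ord.
Qed.

Lemma sameE n (E : seq (qstr n)) (H1 H2 : seq (gvert n)) :
  dham_from0 E -> ham_cycle (@gadj n) H1 -> ham_cycle (@gadj n) H2 ->
  edge_disjoint H1 H2 -> edge_disjoint (gEH E H1) (gEH E H2).
Proof.
move=> d h1 h2 dis x y; apply/negP => /andP[c1 c2].
case: (gEH_edge h1 c1) => a [b [e1 _ ex ey]].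
case: (gEH_edge h2 c2) => a' [b' [e2 _ ea eb]].
rewrite ex in ea; rewrite ey in eb.
move: ea eb => /(Psi_inj d) ea /(Psi_inj d) eb.
subst a' b'.
by move: (dis a b); rewrite e1 e2.
Qed.

Lemma edge_disjointC (T : eqType) (c1 c2 : seq T) :
  edge_disjoint c1 c2 -> edge_disjoint c2 c1.
Proof. by move=> h x y; rewrite andbC. Qed.

Theorem lemma5 (n : nat) (H1 H2 : seq (gvert n)) (E1 E2 : seq (qstr n)) :
  1 <= n ->
  ham_cycle (@gadj n) H1 -> ham_cycle (@gadj n) H2 -> edge_disjoint H1 H2 ->
  dham_from0 E1 -> dham_from0 E2 -> edge_disjoint E1 E2 ->
  let C := [:: gEH E1 H1; gEH E1 H2; gEH E2 H1; gEH E2 H2] in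
  forall i j : nat, i < 4 -> j < 4 -> i != j ->
    edge_disjoint (nth [::] C i) (nth [::] C j).
Proof.
move=> n1 h1 h2 dH d1 d2 dE C.
have dE' := edge_disjointC dE; have dH' := edge_disjointC dH.
case=> [|[|[|[|i]]]] [|[|[|[|j]]]] //= _ _ _;
  first [ exact: (sameE d1 h1 h2 dH) | exact: (sameE d1 h2 h1 dH')
        | exact: (sameE d2 h1 h2 dH) | exact: (sameE d2 h2 h1 dH')
        | exact: (diffE n1 d1 d2 dE h1 h1) | exact: (diffE n1 d1 d2 dE h1 h2)
        | exact: (diffE n1 d1 d2 dE h2 h1) | exact: (diffE n1 d1 d2 dE h2 h2)
        | exact: (diffE n1 d2 d1 dE' h1 h1) | exact: (diffE n1 d2 d1 dE' h1 h2)
        | exact: (diffE n1 d2 d1 dE' h2 h1) | exact: (diffE n1 d2 d1 dE' h2 h2) ].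
Qed.
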